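(* Let $N$ be even, $J_1,J_2>0$, and let $\mathcal H_N$ be the plaquette orbital Hamiltonian on the torus $\mathbb T_N$ (see context). (i) If $J_1=J_2>0$, then every ground state of $\mathcal H_N$ can be obtained from a constant configuration $\mathbf S_{\boldsymbol r}\equiv \boldsymbol e$, for some unit vector $\boldsymbol e\in\mathbb R^2$, by successive applications of a subset of the maps $(\boldsymbol\varphi_{\boldsymbol r})$. (ii) If $J_1>J_2>0$, then every ground state arises from the constant configuration $\mathbf S_{\boldsymbol r}\equiv\boldsymbol e_1$ by successive applications of a subset of the maps $(\boldsymbol\varphi_{\boldsymbol r})$; if $J_2>J_1>0$, every ground state arises in this way from $\mathbf S_{\boldsymbol r}\equiv \boldsymbol e_2$.
   Context: Let $N$ be an even positive integer and $\mathbb T_N=(\mathbb Z/N\mathbb Z)^2$ the $N\times N$ torus, with unit vectors $\boldsymbol e_1=(1,0)$, $\boldsymbol e_2=(0,1)$. Nearest-neighbour edges are of two types: the horizontal edge $\langle \boldsymbol r,\boldsymbol r+\boldsymbol e_1\rangle$ is an $x$-edge if $r_1$ is even and a $z$-edge if $r_1$ is odd; the vertical edge $\langle\boldsymbol r,\boldsymbol r+\boldsymbol e_2\rangle$ is an $x$-edge if $r_2$ is even and a $z$-edge if $r_2$ is odd. (So each plaquette whose lower-left corner has both coordinates even consists of four $x$-edges, and each plaquette whose lower-left corner has both coordinates odd consists of four $z$-edges.) A configuration is $\mathbf S=(\mathbf S_{\boldsymbol r})_{\boldsymbol r\in\mathbb T_N}$ with each $\mathbf S_{\boldsymbol r}=(S^x_{\boldsymbol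 r},S^z_{\boldsymbol r})$ a unit vector in $\mathbb R^2$. The Hamiltonian is $\mathcal H_N(\mathbf S)=-J_1\sum_{\langle \boldsymbol r,\boldsymbol r'\rangle\ x\text{-edge}}S^x_{\boldsymbol r}S^x_{\boldsymbol r'}-J_2\sum_{\langle \boldsymbol r,\boldsymbol r'\rangle\ z\text{-edge}}S^z_{\boldsymbol r}S^z_{\boldsymbol r'}$. A ground state is a configuration minimizing $\mathcal H_N$. For $\boldsymbol r$ with both coordinates even, $\boldsymbol\varphi_{\boldsymbol r}$ maps $\mathbf S$ to the configuration obtained by replacing $S^x_{\boldsymbol r'}$ by $-S^x_{\boldsymbol r'}$ at the four sites $\boldsymbol r'\in\{\boldsymbol r,\boldsymbol r+\boldsymbol e_1,\boldsymbol r+\boldsymbol e_2,\boldsymbol r+\boldsymbol e_1+\boldsymbol e_2\}$ (all other components unchanged); for $\boldsymbol r$ with both coordinates odd, $\boldsymbol\varphi_{\boldsymbol r}$ does the same with the $z$-components instead of the $x$-components. *)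

(* Defs.v *)
From mathcomp Require Import all_boot all_order all_algebra.
From mathcomp Require Import reals.
Set Implicit Arguments. Unset Strict Implicit. Unset Printing Implicit Defensive.
Import Order.TTheory GRing.Theory Num.Theory.
Local Open Scope ring_scope.

(* Sites of the torus T_N = (Z/NZ)^2, coordinates represented in 0..N-1. *)
Definition site (N : nat) := ('I_N * 'I_N)%type.

(* A configuration assigns to each site a pair (S^x, S^z). *)
Definition config (R : realType) (N : nat) := site N -> (R * R)%type.

Definition shift1 N (r : site N) : site N := (ordS r.1, r.2).
Definition shift2 N (r : site N) : site N := (r.1, ordS r.2).

Definition unit_vec (R : realType) (v : R * R) : Prop := v.1 ^+ 2 + v.2 ^+ 2 = 1.
Definition unit_config (R : realType) N (S : config R N) : Prop :=
  forall r, unit_vec (S r).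

Definition edge_energy (R : realType) (J1 J2 : R) (xedge : bool) (a c : R * R) : R :=
  if xedge then - J1 * (a.1 * c.1) else - J2 * (a.2 * c.2).

(* Every nearest-neighbour edge is <r, r+e1> or <r, r+e2>; horizontal edge
   <r,r+e1> is an x-edge iff r_1 even, vertical <r,r+e2> iff r_2 even. *)
Definition hamiltonian (R : realType) N (J1 J2 : R) (S : config R N) : R :=
  \sum_(r : site N)
     (edge_energy J1 J2 (~~ odd r.1) (S r) (S (shift1 r))
    + edge_energy J1 J2 (~~ odd r.2) (S r) (S (shift2 r))).

Definition ground_state (R : realType) N (J1 J2 : R) (S : config R N) : Prop :=
  unit_config S /\
  forall T : config R N, unit_config T -> hamiltonian J1 J2 S <= hamiltonian J1 J2 T.

Definition plaq_pos N (r : site N) : bool :=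
  (~~ odd r.1 && ~~ odd r.2) || (odd r.1 && odd r.2).

Definition plaquette N (r : site N) : seq (site N) :=
  [:: r; shift1 r; shift2 r; shift1 (shift2 r)].

Definition phi (R : realType) N (r : site N) (S : config R N) : config R N :=
  fun r' => if r' \in plaquette r then
              (if ~~ odd r.1 then (- (S r').1, (S r').2) else ((S r').1, - (S r').2))
            else S r'.

Definition const_config (R : realType) N (e : R * R) : config R N := fun _ => e.

(* S is obtained from the constant configuration e by successive applications
   of a subset (a duplicate-free list) of the maps phi_r. *)
Definition generated_from (R : realType) N (e : R * R) (S : config R N) : Prop :=
  exists s : seq (site N), [/\ uniq s, all (@plaq_pos N) s &
    forall r, S r = foldr (@phi R N) (@const_config R N e) s r].

(* Main.v *)
Require Import Defs.
From mathcomp Require Import all_boot all_order all_algebra.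
From mathcomp Require Import reals ring lra.
Import Order.TTheory GRing.Theory Num.Theory.
Local Open Scope ring_scope.
Set Implicit Arguments. Unset Strict Implicit.

Lemma odd_ordS N (i : 'I_N) : ~~ odd N -> odd (ordS i) = ~~ odd i.
Proof.
move=> eN; rewrite /ordS /=.
have lt := ltn_ord i.
case: (ltnP i.+1 N) => h.
  by rewrite modn_small.
have e : i.+1 = N by apply/eqP; rewrite eqn_leq h lt.
rewrite e modnn /=.
have : odd i.+1 = odd N by rewrite e.
by rewrite (negbTE eN) /= => /negbFE ->.
Qed.

Lemma cover1 N (p : bool) (j : 'I_N) : ~~ odd N ->
  exists i0 : 'I_N, forall i : 'I_N,
    ((odd i == p) && ((j == i) || (j == ordS i))) = (i == i0).
Proof.
move=> eN.
case: (boolP (odd j == p)) => hj.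
  exists j => i.
  case: (eqVneq i j) => [->|ne]; first by rewrite ?hj ?eqxx ?andbT ?orTb.
  idtac.
  rewrite /=.
  case: (eqVneq j (ordS i)) => [e|]; last by rewrite andbF.
  move: hj; rewrite e odd_ordS //.
  by case: (odd i); case: p.
exists (ord_pred j) => i.
case: (eqVneq i (ord_pred j)) => [->|ne].
  rewrite ord_predK eqxx orbT andbT.
  move: hj; rewrite -{1}(ord_predK j) odd_ordS //.
  by case: (odd _); case: p.
case: (eqVneq j (ordS i)) => [e|_].
  by case/eqP: ne; rewrite e ordSK.
rewrite orbF.
case: (eqVneq j i) => [e|]; last by rewrite andbF.
by rewrite -e (negbTE hj).
Qed.

Lemma in_plaquette N (q r : site N) :
  (r \in plaquette q) =
  ((r.1 == q.1) || (r.1 == ordS q.1)) && ((r.2 == q.2) || (r.2 == ordS q.2)).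
Proof.
case: r q => r1 r2 [q1 q2].
rewrite /plaquette /shift1 /shift2 !inE !xpair_eqE /=.
by case: (r1 == q1); case: (r1 == ordS q1); case: (r2 == q2); case: (r2 == ordS q2).
Qed.

Lemma cover2 N (p : bool) (r : site N) : ~~ odd N ->
  exists q0 : site N, forall q : site N,
    [&& odd q.1 == p, odd q.2 == p & r \in plaquette q] = (q == q0).
Proof.
move=> eN.
have [i0 Hi] := @cover1 _ p r.1 eN.
have [j0 Hj] := @cover1 _ p r.2 eN.
exists (i0, j0) => [[q1 q2]].
rewrite in_plaquette xpair_eqE /= -Hi -Hj.
by case: (odd q1 == p); case: (odd q2 == p); case: (_ || _); case: (_ || _).
Qed.

Lemma foldr_phi (R : realType) N (S0 : config R N) (s : seq (site N)) r :
  foldr (@phi R N) S0 s r =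
  ((-1) ^+ count (fun q : site N => ~~ odd q.1 && (r \in plaquette q)) s * (S0 r).1,
   (-1) ^+ count (fun q : site N => odd q.1 && (r \in plaquette q)) s * (S0 r).2).
Proof.
elim: s => [|q s IH] /=; first by rewrite !expr0 !mul1r; case: (S0 r).
rewrite {1}/phi IH.
case: (r \in plaquette q); case: (odd q.1) => /=;
  by rewrite ?addn0 ?add0n ?exprS ?mulN1r ?mulNr.
Qed.

Lemma count_sign (R : realType) N (P : pred (site N)) (q0 : site N) (x : R) :
  (forall q, P q = (q == q0) && (x < 0)) -> (-1) ^+ count P (enum {: site N}) * `|x| = x.
Proof.
move=> HP.
case: (ltrP x 0) => hx.
  rewrite (eq_count (a2 := pred1 q0)); last by move=> q; rewrite HP hx andbT.
  rewrite count_uniq_mem ?enum_uniq // mem_enum expr1 mulN1r ltr0_norm //.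
  by rewrite opprK.
rewrite (eq_count (a2 := pred0)); last by move=> q; rewrite HP ltNge hx andbF.
by rewrite count_pred0 expr0 mul1r ger0_norm.
Qed.

Lemma gen_lemma (R : realType) N (S : config R N) (a b : R) : ~~ odd N ->
  (forall r, `|(S r).1| = a) -> (forall r, `|(S r).2| = b) ->
  (forall q r : site N, ~~ odd q.1 -> ~~ odd q.2 -> r \in plaquette q -> (S r).1 = (S q).1) ->
  (forall q r : site N, odd q.1 -> odd q.2 -> r \in plaquette q -> (S r).2 = (S q).2) ->
  generated_from (a, b) S.
Proof.
move=> eN Ha Hb Cx Cz.
pose P := fun q : site N => plaq_pos q &&
  (if ~~ odd q.1 then (S q).1 < 0 else (S q).2 < 0).
exists [seq q <- enum {: site N} | P q]; split.
- by rewrite filter_uniq // enum_uniq.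
- by apply/allP => q; rewrite mem_filter => /andP[/andP[]].
move=> r; rewrite foldr_phi /const_config !(count_filter _ (fun q => P q)).
have [q0 H0] := @cover2 N false r eN.
have [q1 H1] := @cover2 N true r eN.
have := H0 q0; rewrite eqxx => /and3P[/eqP o01 /eqP o02 m0].
have := H1 q1; rewrite eqxx => /and3P[/eqP o11 /eqP o12 m1].
rewrite -(Ha r) -(Hb r).
rewrite (@count_sign R N _ q0) ?(@count_sign R N _ q1); first by case: (S r).
- move=> q; rewrite /predI /= /P /plaq_pos.
  have := H1 q.
  case: (eqVneq q q1) => [->|_].
    by rewrite o11 o12 m1 (Cz q1 r) ?o11 ?o12.
  by case: (odd q.1); case: (odd q.2); case: (r \in plaquette q).
- move=> q; rewrite /predI /= /P /plaq_pos.
  have := H0 q.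
  case: (eqVneq q q0) => [->|_].
    by rewrite o01 o02 m0 (Cx q0 r) ?o01 ?o02.
  by case: (odd q.1); case: (odd q.2); case: (r \in plaquette q).
Qed.

Definition dterm (R : realType) (J1 J2 : R) (b : bool) (a c : R * R) : R :=
  if b then J1 / 2 * (a.1 - c.1) ^+ 2 else J2 / 2 * (a.2 - c.2) ^+ 2.

Definition wterm (R : realType) (J1 J2 : R) (a : R * R) : R :=
  J1 * a.1 ^+ 2 + J2 * a.2 ^+ 2.

Arguments dterm {R}.
Arguments wterm {R}.

Lemma dir_sum (R : realType) N (J1 J2 : R) (S : config R N)
  (sg : site N -> site N) (c : site N -> bool) :
  injective sg -> (forall r, c (sg r) = ~~ c r) ->
  \sum_(r : site N) edge_energy J1 J2 (~~ c r) (S r) (S (sg r)) =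
  \sum_(r : site N) dterm J1 J2 (~~ c r) (S r) (S (sg r))
  - \sum_(r : site N) (wterm J1 J2 (S r) / 2).
Proof.
move=> Hinj Hc.
pose a r := if ~~ c r then J1 / 2 * (S r).1 ^+ 2 else J2 / 2 * (S r).2 ^+ 2.
pose b r := if c r then J1 / 2 * (S r).1 ^+ 2 else J2 / 2 * (S r).2 ^+ 2.
have e1 r : edge_energy J1 J2 (~~ c r) (S r) (S (sg r)) =
   dterm J1 J2 (~~ c r) (S r) (S (sg r)) - (a r + b (sg r)).
  by rewrite /edge_energy /dterm /a /b Hc; case: (c r) => /=; field.
rewrite (eq_bigr _ (fun r _ => e1 r)) sumrB big_split /=.
have -> : \sum_(r : site N) b (sg r) = \sum_(r : site N) b r.
  by rewrite [RHS](reindex_inj Hinj).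
rewrite -big_split /=; congr (_ - _); apply: eq_bigr => r _.
by rewrite /a /b /wterm; case: (c r) => /=; field.
Qed.

Lemma ham_decomp (R : realType) N (J1 J2 : R) (S : config R N) : ~~ odd N ->
  hamiltonian J1 J2 S =
  \sum_(r : site N) (dterm J1 J2 (~~ odd r.1) (S r) (S (shift1 r))
                   + dterm J1 J2 (~~ odd r.2) (S r) (S (shift2 r)))
  - \sum_(r : site N) wterm J1 J2 (S r).
Proof.
move=> eN.
have i1 : injective (@shift1 N).
  by apply: (can_inj (g := fun r : site N => (ord_pred r.1, r.2))) => -[a b]; rewrite /shift1 /= ordSK.
have i2 : injective (@shift2 N).
  by apply: (can_inj (g := fun r : site N => (r.1, ord_pred r.2))) => -[a b]; rewrite /shift2 /= ordSK.
rewrite /hamiltonian big_split /=.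
rewrite (@dir_sum R N J1 J2 S _ (fun r => odd r.1) i1); last first.
  by move=> r; rewrite /shift1 /= odd_ordS.
rewrite (@dir_sum R N J1 J2 S _ (fun r => odd r.2) i2); last first.
  by move=> r; rewrite /shift2 /= odd_ordS.
rewrite big_split /= -!mulr_suml.
by field.
Qed.

Lemma dterm_ge0 (R : realType) (J1 J2 : R) b (a c : R * R) :
  0 < J1 -> 0 < J2 -> 0 <= dterm J1 J2 b a c.
Proof.
move=> h1 h2; rewrite /dterm; case: b; apply: mulr_ge0; rewrite ?sqr_ge0 //;
  apply: divr_ge0; rewrite ?ltW //.
Qed.

Arguments dterm_ge0 {R J1 J2}.

Lemma gs_props (R : realType) N (J1 J2 : R) (S : config R N) (M : R) (e : R * R) :
  ~~ odd N -> 0 < J1 -> 0 < J2 -> J1 <= M -> J2 <= M -> unit_vec e ->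
  wterm J1 J2 e = M -> ground_state J1 J2 S ->
  [/\ forall r : site N, dterm J1 J2 (~~ odd r.1) (S r) (S (shift1 r)) = 0,
      forall r : site N, dterm J1 J2 (~~ odd r.2) (S r) (S (shift2 r)) = 0 &
      forall r : site N, wterm J1 J2 (S r) = M].
Proof.
move=> eN h1 h2 hM1 hM2 He HeM [Hu Hmin].
have T := Hmin (@const_config R N e) (fun _ => He).
rewrite !ham_decomp // in T.
have E1 : \sum_(r : site N) (dterm J1 J2 (~~ odd r.1) (@const_config R N e r)
    (@const_config R N e (shift1 r)) + dterm J1 J2 (~~ odd r.2)
    (@const_config R N e r) (@const_config R N e (shift2 r))) = 0.
  by apply: big1 => r _; rewrite /const_config /dterm;
     case: (~~ odd _); case: (~~ odd _); rewrite !subrr expr0n /= !mulr0 ?addr0.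
rewrite E1 in T.
have E2 : \sum_(r : site N) wterm J1 J2 (@const_config R N e r)
   = \sum_(r : site N) M.
  by apply: eq_bigr => r _; rewrite /const_config HeM.
rewrite E2 in T.
have wle r : wterm J1 J2 (S r) <= M.
  have := Hu r; rewrite /unit_vec /wterm => hu.
  have x0 : 0 <= (S r).1 ^+ 2 by rewrite sqr_ge0.
  have z0 : 0 <= (S r).2 ^+ 2 by rewrite sqr_ge0.
  nra.
set D := \sum_(r : site N) _ in T.
set W := \sum_(r : site N) wterm _ _ _ in T.
have D0 : 0 <= D by apply: sumr_ge0 => r _; apply: addr_ge0; apply: dterm_ge0.
have WM : W <= \sum_(r : site N) M by apply: ler_sum => r _; apply: wle.
set MM := \sum_(r : site N) M in T WM *.
have DD : D = 0 by lra.
have WeqM : W = MM by lra.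
have WW : \sum_(r : site N) (M - wterm J1 J2 (S r)) = 0.
  by rewrite sumrB -/W -/MM WeqM subrr.
have Dr := psumr_eq0P (fun r _ => addr_ge0 (dterm_ge0 _ _ _ h1 h2) (dterm_ge0 _ _ _ h1 h2)) DD.
have Wge : forall r : site N, true -> 0 <= M - wterm J1 J2 (S r).
  by move=> r _; rewrite subr_ge0 wle.
have Wr := psumr_eq0P Wge WW.
split => r.
- have := Dr r isT; have := dterm_ge0 (~~ odd r.1) (S r) (S (shift1 r)) h1 h2.
  have := dterm_ge0 (~~ odd r.2) (S r) (S (shift2 r)) h1 h2. lra.
- have := Dr r isT; have := dterm_ge0 (~~ odd r.1) (S r) (S (shift1 r)) h1 h2.
  have := dterm_ge0 (~~ odd r.2) (S r) (S (shift2 r)) h1 h2. lra.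
- have := Wr r isT; lra.
Qed.

Lemma dzero (R : realType) (J a c : R) : 0 < J -> J / 2 * (a - c) ^+ 2 = 0 -> a = c.
Proof.
move=> hJ /eqP; rewrite mulf_eq0 expf_eq0 subr_eq0 /= => /orP[|/eqP //].
by rewrite mulf_eq0 invr_eq0 (gt_eqF hJ) pnatr_eq0.
Qed.

Arguments dzero {R J a c}.

Lemma edge_conds (R : realType) N (J1 J2 : R) (S : config R N) :
  0 < J1 -> 0 < J2 ->
  (forall r : site N, dterm J1 J2 (~~ odd r.1) (S r) (S (shift1 r)) = 0) ->
  (forall r : site N, dterm J1 J2 (~~ odd r.2) (S r) (S (shift2 r)) = 0) ->
  [/\ forall r : site N, ~~ odd r.1 -> (S r).1 = (S (shift1 r)).1,
      forall r : site N, odd r.1 -> (S r).2 = (S (shift1 r)).2,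
      forall r : site N, ~~ odd r.2 -> (S r).1 = (S (shift2 r)).1 &
      forall r : site N, odd r.2 -> (S r).2 = (S (shift2 r)).2].
Proof.
move=> h1 h2 Dh Dv; split => r hr.
- by have := Dh r; rewrite /dterm hr => /(dzero h1).
- by have := Dh r; rewrite /dterm hr => /(dzero h2).
- by have := Dv r; rewrite /dterm hr => /(dzero h1).
- by have := Dv r; rewrite /dterm hr => /(dzero h2).
Qed.

Lemma plaq_conds (R : realType) N (S : config R N) :
  (forall r : site N, ~~ odd r.1 -> (S r).1 = (S (shift1 r)).1) ->
  (forall r : site N, odd r.1 -> (S r).2 = (S (shift1 r)).2) ->
  (forall r : site N, ~~ odd r.2 -> (S r).1 = (S (shift2 r)).1) ->
  (forall r : site N, odd r.2 -> (S r).2 = (S (shift2 r)).2) ->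
  (forall q r : site N, ~~ odd q.1 -> ~~ odd q.2 -> r \in plaquette q -> (S r).1 = (S q).1) /\
  (forall q r : site N, odd q.1 -> odd q.2 -> r \in plaquette q -> (S r).2 = (S q).2).
Proof.
move=> X1 Z1 X2 Z2; split => q r h1 h2;
  rewrite /plaquette !inE => /or4P [/eqP->|/eqP->|/eqP->|/eqP->] //.
- by rewrite -X1.
- by rewrite -X2.
- by rewrite -X1 // -X2.
- by rewrite -Z1.
- by rewrite -Z2.
- by rewrite -Z1 // -Z2.
Qed.

Lemma conn1 N (T : Type) (g : 'I_N -> T) (hN : (0 < N)%N) :
  (forall i, g (ordS i) = g i) -> forall i, g i = g (Ordinal hN).
Proof.
move=> Hg.
suff H : forall n (i : 'I_N), val i = n -> g i = g (Ordinal hN).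
  by move=> i; apply: (H i).
elim=> [|n IH] i hi.
  by congr g; apply: val_inj.
have ltn : (n < N)%N by apply: ltnW; rewrite -hi ltn_ord.
have -> : i = ordS (Ordinal ltn).
  apply: val_inj => /=; rewrite modn_small; first exact: hi.
  by move: (ltn_ord i); rewrite hi.
by rewrite Hg; apply: IH.
Qed.

Lemma conn2 N (T : Type) (f : site N -> T) (hN : (0 < N)%N) :
  (forall r, f (shift1 r) = f r) -> (forall r, f (shift2 r) = f r) ->
  forall r, f r = f (Ordinal hN, Ordinal hN).
Proof.
move=> H1 H2 [a b].
have := @conn1 N T (fun a => f (a, b)) hN (fun i => H1 (i, b)) a.
have := @conn1 N T (fun b => f (Ordinal hN, b)) hN (fun i => H2 (Ordinal hN, i)) b.
by move=> /= -> ->.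
Qed.

Lemma abs_eq_sq (R : realType) (x y : R) : x ^+ 2 = y ^+ 2 -> `|x| = `|y|.
Proof. by move/eqP; rewrite eqf_sqr => /orP[/eqP->|/eqP->]; rewrite ?normrN. Qed.

Lemma sq_eq1_abs (R : realType) (x : R) : x ^+ 2 = 1 -> `|x| = 1.
Proof. by move/eqP; rewrite sqrf_eq1 => /orP[/eqP->|/eqP->]; rewrite ?normrN normr1. Qed.

Lemma zero_comp (R : realType) (J1 J2 x z : R) : J2 < J1 ->
  x ^+ 2 + z ^+ 2 = 1 -> J1 * x ^+ 2 + J2 * z ^+ 2 = J1 -> z = 0 /\ `|x| = 1.
Proof.
move=> hlt hu hw.
have E : (J1 - J2) * z ^+ 2 = J1 * (x ^+ 2 + z ^+ 2) - (J1 * x ^+ 2 + J2 * z ^+ 2) by ring.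
rewrite hu hw mulr1 subrr in E.
move/eqP: E; rewrite mulf_eq0 subr_eq0 (gt_eqF hlt) /= sqrf_eq0 => /eqP z0.
split=> //; apply: sq_eq1_abs; move: hu; rewrite z0 expr0n /= addr0 //.
Qed.

Theorem theorem2p1 (R : realType) (N : nat) (J1 J2 : R) :
  (0 < N)%N -> ~~ odd N -> 0 < J1 -> 0 < J2 ->
  forall S : config R N, ground_state J1 J2 S ->
    [/\ (J1 = J2 -> exists e : R * R, unit_vec e /\ generated_from e S),
        (J2 < J1 -> generated_from (1, 0) S) &
        (J1 < J2 -> generated_from (0, 1) S)].
Proof.
move=> hN eN h1 h2 S GS.
have Hu := GS.1.
have u10 : unit_vec ((1, 0) : R * R) by rewrite /unit_vec /= expr1n expr0n addr0.
have u01 : unit_vec ((0, 1) : R * R) by rewrite /unit_vec /= expr1n expr0n add0r.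
have w10 : wterm J1 J2 ((1, 0) : R * R) = J1.
  by rewrite /wterm /= expr1n expr0n mulr1 mulr0 addr0.
have w01 : wterm J1 J2 ((0, 1) : R * R) = J2.
  by rewrite /wterm /= expr1n expr0n mulr1 mulr0 add0r.
split.
- move=> E.
  have hle : J2 <= J1 by rewrite E.
  have [Dh Dv Hw] := gs_props eN h1 h2 (lexx J1) hle u10 w10 GS.
  have [X1 Z1 X2 Z2] := edge_conds h1 h2 Dh Dv.
  have [Cx Cz] := plaq_conds X1 Z1 X2 Z2.
  have sq1 r : (S (shift1 r)).1 ^+ 2 = (S r).1 ^+ 2 /\ (S (shift1 r)).2 ^+ 2 = (S r).2 ^+ 2.
    have u1 := Hu r; have u2 := Hu (shift1 r); rewrite /unit_vec in u1 u2.
    case: (boolP (odd r.1)) => o.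
    - rewrite -(Z1 r o) in u2 *; split=> //; nra.
    - rewrite -(X1 r o) in u2 *; split=> //; nra.
  have sq2 r : (S (shift2 r)).1 ^+ 2 = (S r).1 ^+ 2 /\ (S (shift2 r)).2 ^+ 2 = (S r).2 ^+ 2.
    have u1 := Hu r; have u2 := Hu (shift2 r); rewrite /unit_vec in u1 u2.
    case: (boolP (odd r.2)) => o.
    - rewrite -(Z2 r o) in u2 *; split=> //; nra.
    - rewrite -(X2 r o) in u2 *; split=> //; nra.
  pose r0 : site N := (Ordinal hN, Ordinal hN).
  have cx r : (S r).1 ^+ 2 = (S r0).1 ^+ 2 :=
    @conn2 N R (fun r => (S r).1 ^+ 2) hN (fun r => (sq1 r).1) (fun r => (sq2 r).1) r.
  have cz r : (S r).2 ^+ 2 = (S r0).2 ^+ 2 :=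
    @conn2 N R (fun r => (S r).2 ^+ 2) hN (fun r => (sq1 r).2) (fun r => (sq2 r).2) r.
  exists (`|(S r0).1|, `|(S r0).2|); split.
    by rewrite /unit_vec /= !real_normK ?num_real //; exact: Hu r0.
  by apply: gen_lemma eN _ _ Cx Cz => r /=; apply: abs_eq_sq; [exact: cx | exact: cz].
- move=> hlt.
  have [Dh Dv Hw] := gs_props eN h1 h2 (lexx J1) (ltW hlt) u10 w10 GS.
  have [X1 Z1 X2 Z2] := edge_conds h1 h2 Dh Dv.
  have [Cx Cz] := plaq_conds X1 Z1 X2 Z2.
  apply: gen_lemma eN _ _ Cx Cz => r.
  + by have [] := zero_comp hlt (Hu r) (Hw r).
  + by have [-> _] := zero_comp hlt (Hu r) (Hw r); rewrite normr0.
- move=> hlt.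
  have [Dh Dv Hw] := gs_props eN h1 h2 (ltW hlt) (lexx J2) u01 w01 GS.
  have [X1 Z1 X2 Z2] := edge_conds h1 h2 Dh Dv.
  have [Cx Cz] := plaq_conds X1 Z1 X2 Z2.
  have zc r := @zero_comp R J2 J1 (S r).2 (S r).1 hlt
    (etrans (addrC _ _) (Hu r)) (etrans (addrC _ _) (Hw r)).
  apply: gen_lemma eN _ _ Cx Cz => r.
  + by have [-> _] := zc r; rewrite normr0.
  + by have [] := zc r.
Qed.
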